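(* Suppose that for every $n\in\omega$, $\mathbb{P}_n$ is a pre-Pawlikowski lattice such that $\mathsf{S}_{\mathrm{fin}}(\mathbb{V}_{1_{\mathbb{P}_n}},\mathbb{V}_{1_{\mathbb{P}_n}})$ holds. Then $\mathbb{P}:=\prod_{n\in\omega}\mathbb{P}_n$, endowed with the pointwise ordering, is a pre-Pawlikowski lattice satisfying $\mathsf{S}_{\mathrm{fin}}(\mathbb{V}_{1_{\mathbb{P}}},\mathbb{V}_{1_{\mathbb{P}}})$, where $1_{\mathbb{P}}:=(1_{\mathbb{P}_n})_{n\in\omega}$.
   Context: A lattice is a poset where any two elements have a supremum and an infimum; it is bounded if it has a minimum $0$ and maximum $1$. A prime element of a bounded lattice is $q\neq 1$ such that $a\wedge b\leq q$ implies $a\leq q$ or $b\leq q$. The lattice has enough prime elements if whenever $a\not\leq b$ there is a prime $q$ with $b\leq q$ and $a\not\leq q$. A pre-Pawlikowski lattice is a bounded lattice with enough prime elements. For $p$ in a lattice $\mathbb{Q}$, $\mathbb{V}_p$ is the family of subsets $A\subseteq\mathbb{Q}$ with $\sup A=p$. $\mathsf{S}_{\mathrm{fin}}(\mathbb{V}_p,\mathbb{V}_p)$ means: for every sequence $(A_n)_{n\in\omega}$ of members of $\mathbb{V}_p$ there are finite $F_n\subseteq A_n$ with $\sup\bigcup_{n}F_n=p$. *)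

(* Defs.v *)
From Stdlib Require Import List.
Set Implicit Arguments.

Section Lat.
Variables (T : Type) (le : T -> T -> Prop).

Definition partial_order : Prop :=
  (forall x, le x x) /\
  (forall x y, le x y -> le y x -> x = y) /\
  (forall x y z, le x y -> le y z -> le x z).

Definition upper_bound (A : T -> Prop) (u : T) : Prop := forall a, A a -> le a u.
Definition lower_bound (A : T -> Prop) (l : T) : Prop := forall a, A a -> le l a.

Definition is_sup (A : T -> Prop) (p : T) : Prop :=
  upper_bound A p /\ forall u, upper_bound A u -> le p u.
Definition is_inf (A : T -> Prop) (m : T) : Prop :=
  lower_bound A m /\ forall l, lower_bound A l -> le l m.

Definition pair_set (a b : T) : T -> Prop := fun x => x = a \/ x = b.

Definition is_max (t : T) : Prop := forall x, le x t.
Definition is_min (t : T) : Prop := forall x, le t x.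

Definition lattice : Prop :=
  partial_order /\
  (forall a b, exists s, is_sup (pair_set a b) s) /\
  (forall a b, exists m, is_inf (pair_set a b) m).

Definition bounded_lattice : Prop :=
  lattice /\ (exists z, is_min z) /\ (exists o, is_max o).

Definition prime_elt (q : T) : Prop :=
  ~ is_max q /\
  forall a b m, is_inf (pair_set a b) m -> le m q -> le a q \/ le b q.

Definition enough_primes : Prop :=
  forall a b, ~ le a b -> exists q, prime_elt q /\ le b q /\ ~ le a q.

Definition pre_Pawlikowski : Prop := bounded_lattice /\ enough_primes.

(* V_p = {A | sup A = p};  S_fin(V_p, V_p), finite subsets given as lists *)
Definition Sfin_V (p : T) : Prop :=
  forall A : nat -> (T -> Prop), (forall n, is_sup (A n) p) ->
  exists F : nat -> list T,
    (forall n x, In x (F n) -> A n x) /\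
    is_sup (fun x => exists n, In x (F n)) p.

End Lat.

Definition prod_le (P : nat -> Type) (le : forall n, P n -> P n -> Prop)
  (x y : forall n, P n) : Prop := forall n, le n (x n) (y n).

(* Main.v *)
Require Import Defs.
From Stdlib Require Import List Arith Cantor Eqdep_dec ClassicalEpsilon FunctionalExtensionality.

Lemma dep_choice (P : nat -> Type) (R : forall n, P n -> Prop) :
  (forall n, exists x : P n, R n x) -> exists f : forall n, P n, forall n, R n (f n).
Proof.
  intros H. exists (fun n => proj1_sig (constructive_indefinite_description _ (H n))).
  intros n. exact (proj2_sig (constructive_indefinite_description _ (H n))).
Qed.

Lemma nd_choice (B : Type) (R : nat -> B -> Prop) :
  (forall n, exists x : B, R n x) -> exists f : nat -> B, forall n, R n (f n).
Proof.
  intros H. exists (fun n => proj1_sig (constructive_indefinite_description _ (H n))).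
  intros n. exact (proj2_sig (constructive_indefinite_description _ (H n))).
Qed.

Definition upd (P : nat -> Type) (f : forall m, P m) (n : nat) (x : P n) : forall m, P m :=
  fun m => match Nat.eq_dec n m with left e => eq_rect n P x m e | right _ => f m end.

Lemma upd_eq (P : nat -> Type) f n (x : P n) : upd P f n x n = x.
Proof.
  unfold upd. destruct (Nat.eq_dec n n) as [e|e]; [|congruence].
  rewrite (UIP_dec Nat.eq_dec e eq_refl). reflexivity.
Qed.

Lemma upd_neq (P : nat -> Type) f n (x : P n) m : n <> m -> upd P f n x m = f m.
Proof.
  intros H. unfold upd. destruct (Nat.eq_dec n m); congruence.
Qed.

Lemma list_lift (P : nat -> Type) n (A : (forall m, P m) -> Prop) (G : list (P n)) :
  (forall x, In x G -> exists a, A a /\ a n = x) ->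
  exists L : list (forall m, P m), (forall a, In a L -> A a /\ In (a n) G) /\
    (forall x, In x G -> exists a, In a L /\ a n = x).
Proof.
  induction G as [|y G IH]; intros H.
  - exists nil. split; intros; contradiction.
  - destruct (H y (or_introl eq_refl)) as [b [Hb1 Hb2]].
    destruct IH as [L [HL1 HL2]].
    { intros x Hx. apply H. right. exact Hx. }
    exists (b :: L). split.
    + intros a [<-|Ha]. split; [exact Hb1| left; symmetry; exact Hb2].
      destruct (HL1 a Ha). split; [assumption| right; assumption].
    + intros x [<-|Hx]. exists b. split; [left; reflexivity| exact Hb2].
      destruct (HL2 x Hx) as [a [? ?]]. exists a. split; [right|]; assumption.
Qed.

Theorem lemma2p1 (P : nat -> Type) (le : forall n, P n -> P n -> Prop)
  (top : forall n, P n)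
  (Htop : forall n, is_max (le n) (top n))
  (HP : forall n, pre_Pawlikowski (le n))
  (HS : forall n, Sfin_V (le n) (top n)) :
  pre_Pawlikowski (prod_le P le) /\ Sfin_V (prod_le P le) top.
Proof.
  assert (Hpo : forall n, partial_order (le n)) by (intro n; apply (HP n)).
  assert (Hsup : forall n a b, exists s, is_sup (le n) (pair_set a b) s)
    by (intro n; apply (HP n)).
  assert (Hinf : forall n a b, exists s, is_inf (le n) (pair_set a b) s)
    by (intro n; apply (HP n)).
  assert (Hmin : forall n, exists z, is_min (le n) z) by (intro n; apply (HP n)).
  assert (Hpr : forall n, enough_primes (le n)) by (intro n; apply (HP n)).
  assert (Hrefl : forall n x, le n x x) by (intros n; apply (Hpo n)).
  assert (Hinfc : forall a b m, is_inf (prod_le P le) (pair_set a b) m ->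
            forall n, is_inf (le n) (pair_set (a n) (b n)) (m n)).
  { intros a b m H n. split.
    - intros x [->| ->]; [apply (proj1 H a (or_introl eq_refl)) | apply (proj1 H b (or_intror eq_refl))].
    - intros l Hl.
      assert (Hl' : lower_bound (prod_le P le) (pair_set a b) (upd P m n l)).
      { intros c Hc k. destruct (Nat.eq_dec n k) as [<-|Hk].
        + rewrite upd_eq. apply Hl. destruct Hc as [->| ->]; [left|right]; reflexivity.
        + rewrite upd_neq by exact Hk. apply (proj1 H c Hc). }
      pose proof (proj2 H _ Hl' n) as Hn. rewrite upd_eq in Hn. exact Hn. }
  assert (Hsupc : forall A, is_sup (prod_le P le) A top ->
            forall n, is_sup (le n) (fun x => exists a, A a /\ a n = x) (top n)).
  { intros A H n. split.
    - intros x _. apply Htop.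
    - intros u Hu.
      assert (Hu' : upper_bound (prod_le P le) A (upd P top n u)).
      { intros a Ha k. destruct (Nat.eq_dec n k) as [<-|Hk].
        + rewrite upd_eq. apply Hu. exists a. split; [exact Ha|reflexivity].
        + rewrite upd_neq by exact Hk. apply Htop. }
      pose proof (proj2 H _ Hu' n) as Hn. rewrite upd_eq in Hn. exact Hn. }
  split; [split; [split; [split; [|split]|]|]|].
  -
    split; [|split].
    + intros x n. apply Hrefl.
    + intros x y H1 H2. apply functional_extensionality_dep. intro n.
      apply (Hpo n); [apply H1|apply H2].
    + intros x y z H1 H2 n. apply (Hpo n) with (y n); [apply H1|apply H2].
  - intros a b.
    destruct (dep_choice P (fun n s => is_sup (le n) (pair_set (a n) (b n)) s)
               (fun n => Hsup n (a n) (b n))) as [s Hs].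
    exists s. split.
    + intros c [->| ->] n; apply (Hs n); [left|right]; reflexivity.
    + intros u Hu n. apply (Hs n). intros x [->| ->];
        [apply (Hu a (or_introl eq_refl)) | apply (Hu b (or_intror eq_refl))].
  - intros a b.
    destruct (dep_choice P (fun n s => is_inf (le n) (pair_set (a n) (b n)) s)
               (fun n => Hinf n (a n) (b n))) as [s Hs].
    exists s. split.
    + intros c [->| ->] n; apply (Hs n); [left|right]; reflexivity.
    + intros u Hu n. apply (Hs n). intros x [->| ->];
        [apply (Hu a (or_introl eq_refl)) | apply (Hu b (or_intror eq_refl))].
  - split.
    + destruct (dep_choice P (fun n z => is_min (le n) z) Hmin) as [z Hz].
      exists z. intros x n. apply Hz.
    + exists top. intros x n. apply Htop.
  -
    intros a b Hab.
    assert (Hex : exists n, ~ le n (a n) (b n)).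
    { apply Classical_Prop.NNPP; intro Hno. apply Hab. intro n.
      apply Classical_Prop.NNPP. intro Hc. apply Hno. exists n. exact Hc. }
    destruct Hex as [n Hn].
    destruct (Hpr n _ _ Hn) as [qn [[Hqmax Hqpr] [Hbq Haq]]].
    exists (upd P top n qn). split; [split|split].
    + intros Hmax. apply Hqmax. intro x.
      pose proof (Hmax top n) as Ht. rewrite upd_eq in Ht.
      apply (Hpo n) with (top n); [apply Htop| exact Ht].
    + intros c d m Hm Hle.
      pose proof (Hinfc c d m Hm n) as Hmn.
      pose proof (Hle n) as Hlen. rewrite upd_eq in Hlen.
      destruct (Hqpr _ _ _ Hmn Hlen) as [H|H]; [left|right]; intro k;
        (destruct (Nat.eq_dec n k) as [<-|Hk];
         [rewrite upd_eq; exact H | rewrite upd_neq by exact Hk; apply Htop]).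
    + intro k. destruct (Nat.eq_dec n k) as [<-|Hk];
        [rewrite upd_eq; exact Hbq | rewrite upd_neq by exact Hk; apply Htop].
    + intro H. apply Haq. pose proof (H n) as Hn'. rewrite upd_eq in Hn'. exact Hn'.
  -
    intros A HA.
    assert (HG : forall n, exists G : nat -> list (forall m, P m),
      (forall j a, In a (G j) -> A (Cantor.to_nat (n, j)) a) /\
      is_sup (le n) (fun x => exists j a, In a (G j) /\ a n = x) (top n)).
    { intro n.
      destruct (HS n (fun j x => exists a, A (Cantor.to_nat (n, j)) a /\ a n = x)
                 (fun j => Hsupc _ (HA _) n)) as [F [HF1 HF2]].
      destruct (nd_choice _ (fun j L =>
          (forall a, In a L -> A (Cantor.to_nat (n, j)) a /\ In (a n) (F j)) /\
          (forall x, In x (F j) -> exists a, In a L /\ a n = x))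
          (fun j => list_lift P n _ (F j) (HF1 j))) as [G HG].
      exists G. split.
      - intros j a Ha. apply (proj1 (HG j) a Ha).
      - split.
        + intros x _. apply Htop.
        + intros u Hu. apply (proj2 HF2). intros x [j Hx].
          destruct (proj2 (HG j) x Hx) as [a [Ha1 Ha2]].
          apply Hu. exists j, a. split; assumption. }
    destruct (nd_choice _ _ HG) as [GG HGG].
    exists (fun k => GG (fst (Cantor.of_nat k)) (snd (Cantor.of_nat k))). split.
    + intros k x Hx.
      pose proof (proj1 (HGG _) _ _ Hx) as H.
      rewrite <- surjective_pairing, Cantor.cancel_to_of in H. exact H.
    + split.
      * intros x _ n. apply Htop.
      * intros u Hu n. apply (proj2 (proj2 (HGG n))).
        intros x [j [a [Ha <-]]]. apply (Hu a).
        exists (Cantor.to_nat (n, j)). rewrite Cantor.cancel_of_to. exact Ha.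
Qed.
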